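(* Let $\vec{\alpha}=\langle\alpha_s:s\in[\mathbb{N}]^{<\infty}\rangle$ be a sequence of nonstandard hypernatural numbers. Then $([\mathbb{N}]^\infty,\vec{\alpha},\subseteq)$ is an $\vec{\alpha}$-Ramsey space: a set $\mathcal{X}\subseteq[\mathbb{N}]^\infty$ is $\vec{\alpha}$-Ramsey if and only if it has the Baire property with respect to the $\vec{\alpha}$-Ellentuck topology, and $\mathcal{X}$ is $\vec{\alpha}$-Ramsey null if and only if it is meager with respect to the $\vec{\alpha}$-Ellentuck topology.
   Context: Setting (Alpha-Theory of Benci–Di Nasso): ZFC together with a new symbol $\alpha$ satisfying: ($\alpha$1) every sequence $\varphi=\langle\varphi_i:i\in\mathbb{N}\rangle$ has a unique ideal value $\varphi[\alpha]$; ($\alpha$2) if $\varphi[\alpha]=\psi[\alpha]$ and $f\circ\varphi$, $f\circ\psi$ make sense then $(f\circ\varphi)[\alpha]=(f\circ\psi)[\alpha]$; ($\alpha$3) constant real sequences $r$ have ideal value $r$, and $\langle i\rangle$ has ideal value $\alpha\notin\mathbb{N}$; ($\alpha$4) if $\vartheta_i=\{\varphi_i,\psi_i\}$ then $\vartheta[\alpha]=\{\varphi[\alpha],\psi[\alpha]\}$; ($\alpha$5) the constant sequence $\emptyset$ has ideal value $\emptyset$, and for nonempty $\psi_i$, $\psi[\alpha]=\{\vartheta[\alpha]:\vartheta_i\in\psi_i\ \forall i\}$. ${}^*A$ is the ideal value of the constant sequence $A$; ${}^*\mathbb{N}\setminus\mathbb{N}$ is the set of nonstandard hypernatural numbers.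 $[X]^{<\infty}$, $[X]^\infty$: finite, resp. infinite, subsets of $X\subseteq\mathbb{N}$. For finite $s$, $s\sqsubseteq X$ means $s=\{j\in X:j\le i\}$ for some $i$. A tree on $\mathbb{N}$ is a nonempty $T\subseteq[\mathbb{N}]^{<\infty}$ closed under $\sqsubseteq$-initial segments; $[T]=\{X\in[\mathbb{N}]^\infty:$ every finite $s\sqsubseteq X$ is in $T\}$; stem $st(T)$ = $\sqsubseteq$-maximal $s\in T$ comparable with all elements of $T$; $T/s=\{t\in T:s\sqsubseteq t\}$. An $\vec{\alpha}$-tree is a tree $T$ with a stem, $T/st(T)\neq\emptyset$, and $s\cup\{\alpha_s\}\in{}^*T$ for all $s\in T/st(T)$. $\mathcal{X}\subseteq[\mathbb{N}]^\infty$ is $\vec{\alpha}$-Ramsey if for every $\vec{\alpha}$-tree $T$ there is an $\vec{\alpha}$-tree $S\subseteq T$ with $st(S)=st(T)$ and $[S]\subseteq\mathcal{X}$ or $[S]\cap\mathcal{X}=\emptyset$; $\vec{\alpha}$-Ramsey null if always $[S]\cap\mathcal{X}=\emptyset$ can be achieved. The $\vec{\alpha}$-Ellentuck topology on $[\mathbb{N}]^\infty$ is the topology with basis $\{[T]:T\text{ an }\vec{\alpha}\text{-tree}\}$. *)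

(* Defs.v *)
(* Alpha-Theory is modelled by its standard ZFC model:
   the ultrapower of nat by a nonprincipal ultrafilter U on nat
   (alpha = [identity], U = { A | alpha \in *A }).  A hypernatural number is
   represented by a sequence f : nat -> nat (its class mod U). *)
From mathcomp Require Import all_boot.
Set Implicit Arguments. Unset Strict Implicit. Unset Printing Implicit Defensive.

Definition ultrafilter (U : (nat -> Prop) -> Prop) : Prop :=
  [/\ U (fun _ => True), ~ U (fun _ => False),
      (forall A B : nat -> Prop, U A -> (forall i, A i -> B i) -> U B),
      (forall A B : nat -> Prop, U A -> U B -> U (fun i => A i /\ B i))
    & (forall A : nat -> Prop, U A \/ U (fun i => ~ A i))].

Definition nonprincipal_ultrafilter (U : (nat -> Prop) -> Prop) : Prop :=
  ultrafilter U /\ forall n : nat, U (fun i => i <> n).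

Definition nonstandard (U : (nat -> Prop) -> Prop) (f : nat -> nat) : Prop :=
  forall n : nat, U (fun i => f i <> n).

(* finite subsets are represented canonically by strictly increasing lists *)
Definition is_fin (s : seq nat) : Prop := sorted ltn s.

Definition infinite_set (X : nat -> bool) : Prop :=
  forall m, exists n, m <= n /\ X n.

Definition iseg (s : seq nat) (X : nat -> bool) : Prop :=
  exists k : nat, forall j, (j \in s) = X j && (j < k).

Definition iseg_fin (s t : seq nat) : Prop := iseg s (fun j => j \in t).

Definition tree (T : seq nat -> Prop) : Prop :=
  [/\ exists t, T t,
      (forall t, T t -> is_fin t)
    & (forall s t, T t -> is_fin s -> iseg_fin s t -> T s)].

Definition body (T : seq nat -> Prop) (X : nat -> bool) : Prop :=
  infinite_set X /\ forall s, is_fin s -> iseg s X -> T s.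

Definition comparable_all (T : seq nat -> Prop) (s : seq nat) : Prop :=
  forall t, T t -> iseg_fin s t \/ iseg_fin t s.

Definition is_stem (T : seq nat -> Prop) (s : seq nat) : Prop :=
  [/\ T s, comparable_all T s
    & forall s', T s' -> comparable_all T s' -> iseg_fin s s' -> s' = s].

Definition restr (T : seq nat -> Prop) (s : seq nat) : seq nat -> Prop :=
  fun t => T t /\ iseg_fin s t.

Definition Tmem (T : seq nat -> Prop) (A : nat -> Prop) : Prop :=
  exists t, [/\ is_fin t, (forall j, j \in t <-> A j) & T t].

(* s U {alpha_s} \in *T, where alpha_s = [a s]_U; by Los' theorem *)
Definition star_mem_ext (U : (nat -> Prop) -> Prop) (T : seq nat -> Prop)
  (s : seq nat) (f : nat -> nat) : Prop :=
  U (fun i => Tmem T (fun j => j \in s \/ j = f i)).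

Definition alpha_tree (U : (nat -> Prop) -> Prop) (a : seq nat -> nat -> nat)
  (T : seq nat -> Prop) : Prop :=
  tree T /\ exists st, [/\ is_stem T st, (exists t, restr T st t)
    & forall s, restr T st s -> star_mem_ext U T s (a s)].

Definition alpha_Ramsey U a (XX : (nat -> bool) -> Prop) : Prop :=
  forall T, alpha_tree U a T ->
    exists S, [/\ alpha_tree U a S, (forall t, S t -> T t),
      (exists st, is_stem T st /\ is_stem S st)
    & (forall X, body S X -> XX X) \/ (forall X, body S X -> ~ XX X)].

Definition alpha_Ramsey_null U a (XX : (nat -> bool) -> Prop) : Prop :=
  forall T, alpha_tree U a T ->
    exists S, [/\ alpha_tree U a S, (forall t, S t -> T t),
      (exists st, is_stem T st /\ is_stem S st)
    & (forall X, body S X -> ~ XX X)].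

Definition aE_open U a (O : (nat -> bool) -> Prop) : Prop :=
  (forall X, O X -> infinite_set X) /\
  forall X, O X -> exists T, [/\ alpha_tree U a T, body T X
                                & forall Y, body T Y -> O Y].

Definition aE_closure U a (N : (nat -> bool) -> Prop) : (nat -> bool) -> Prop :=
  fun X => infinite_set X /\
    forall O, aE_open U a O -> O X -> exists Y, O Y /\ N Y.

Definition aE_nowhere_dense U a (N : (nat -> bool) -> Prop) : Prop :=
  forall O, aE_open U a O -> (forall X, O X -> aE_closure U a N X) ->
    forall X, ~ O X.

Definition aE_meager U a (M : (nat -> bool) -> Prop) : Prop :=
  exists Ns : nat -> (nat -> bool) -> Prop,
    (forall n, aE_nowhere_dense U a (Ns n)) /\
    forall X, M X -> exists n, Ns n X.

Definition aE_Baire U a (XX : (nat -> bool) -> Prop) : Prop :=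
  exists O, aE_open U a O /\
    aE_meager U a (fun X => (XX X /\ ~ O X) \/ (O X /\ ~ XX X)).

(* Main.v *)
Require Import Defs.
From mathcomp Require Import all_boot.
From mathcomp Require Import zify.
From Stdlib Require Import Classical ClassicalEpsilon.
Set Implicit Arguments. Unset Strict Implicit.


Definition cmp (u v : seq nat) := prefix u v || prefix v u.

Lemma ltn_tr : transitive ltn. Proof. move=> ? ? ?; exact: ltn_trans. Qed.

Lemma prefix_anti (u v : seq nat) : prefix u v -> prefix v u -> u = v.
Proof.
move=> h1 h2; have s1 := size_prefix h1; have s2 := size_prefix h2.
move: h1; rewrite prefixE => /eqP <-; rewrite take_oversize //.
Qed.

Lemma prefix_cmp (u v w : seq nat) : prefix u w -> prefix v w -> cmp u v.
Proof.
rewrite /cmp !prefixE => /eqP hu /eqP hv.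
case: (leqP (size u) (size v)) => h.
  by apply/orP; left; rewrite -{1}hv take_takel // hu.
by apply/orP; right; rewrite -{1}hu take_takel ?hv // ltnW.
Qed.

Lemma cmp_size (u v : seq nat) : cmp u v -> size u <= size v -> prefix u v.
Proof.
case/orP => // h hs; have := size_prefix h => hs2.
have -> : u = v.
  by move: h; rewrite prefixE => /eqP <-; rewrite take_oversize.
exact: prefix_refl.
Qed.

Lemma prefix_rcons_inv (u s : seq nat) x : prefix u (rcons s x) ->
  u = rcons s x \/ prefix u s.
Proof.
move=> h; have := size_prefix h; rewrite size_rcons leq_eqVlt => /orP[/eqP e|l].
  left; move: h; rewrite prefixE e -(size_rcons s x) take_size => /eqP ->//.
right; move: h; rewrite !prefixE -cats1 takel_cat //.
Qed.

Lemma prefix_take_ge (t u : seq nat) n : prefix t u -> size t <= n -> prefix t (take n u).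
Proof.
rewrite !prefixE => /eqP h hn; rewrite take_takel // h //.
Qed.

Lemma take_rcons_le (s : seq nat) x n : n <= size s -> take n (rcons s x) = take n s.
Proof. by move=> h; rewrite -cats1 takel_cat. Qed.

Lemma prefix_mem (u v : seq nat) j : prefix u v -> j \in u -> j \in v.
Proof. by move=> /prefixP[r ->]; rewrite mem_cat => ->. Qed.

Lemma filter_lt_prefix (t : seq nat) k : sorted ltn t ->
  prefix [seq j <- t | j < k] t.
Proof.
elim: t => //= x t IH Hs.
have Ht := path_sorted Hs.
case: ifP => hx; first by rewrite eqxx IH.
have Hall := order_path_min ltn_tr Hs.
suff -> : [seq j <- t | j < k] = [::] by [].
apply/eqP; rewrite -[_ == _]negbK -has_filter -all_predC.
apply: sub_all Hall => j /=; lia.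
Qed.

Lemma iseg_fin_prefix (s t : seq nat) : is_fin s -> is_fin t ->
  (iseg_fin s t <-> prefix s t).
Proof.
move=> Hs Ht; split.
  move=> [k Hk].
  have -> : s = [seq j <- t | j < k].
    apply: (irr_sorted_eq ltn_tr) => //; first exact: ltnn.
      exact: (sorted_filter ltn_tr _ Ht).
    by move=> j; rewrite mem_filter Hk andbC.
  exact: filter_lt_prefix.
elim: t s Ht {Hs} => [|x t IH] [|y s] //= Ht.
- by move=> _; exists 0 => j; rewrite andbF.
- by move=> _; exists 0 => j; rewrite andbF.
move=> /andP[/eqP -> Hp].
have [k Hk] := IH s (path_sorted Ht) Hp.
have Hall := order_path_min ltn_tr Ht.
exists (maxn k x.+1) => j; rewrite !in_cons Hk.
case: (eqVneq j x) => [->|hj] /=; first by rewrite leq_max ltnSn orbT.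
case hjt: (j \in t) => //=.
have := allP Hall j hjt => /= hxj.
apply/idP/idP; rewrite leq_max; [move=> -> // | case/orP => // ]; lia.
Qed.

Definition pre (X : nat -> bool) k := [seq j <- iota 0 k | X j].

Lemma pre_fin X k : is_fin (pre X k).
Proof. exact: (sorted_filter ltn_tr _ (iota_ltn_sorted 0 k)). Qed.

Lemma pre_iseg X k : iseg (pre X k) X.
Proof. by exists k => j; rewrite mem_filter mem_iota. Qed.

Lemma iseg_pre X s : is_fin s -> iseg s X -> exists k, s = pre X k.
Proof.
move=> Hs [k Hk]; exists k.
apply: (irr_sorted_eq ltn_tr) => //; first exact: ltnn.
  exact: pre_fin.
by move=> j; rewrite Hk mem_filter mem_iota.
Qed.

Lemma pre_mono X k k' : k <= k' -> prefix (pre X k) (pre X k').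
Proof.
move=> h; rewrite /pre -(subnKC h) iotaD filter_cat; exact: prefix_prefix.
Qed.

Lemma pre_cmp X k k' : cmp (pre X k) (pre X k').
Proof.
apply: (@prefix_cmp _ _ (pre X (maxn k k'))); apply: pre_mono; lia.
Qed.

Lemma pre_big X : infinite_set X -> forall m, exists k, m <= size (pre X k).
Proof.
move=> Hinf; elim=> [|m [k Hk]]; first by exists 0.
have [n [hkn Xn]] := Hinf k; exists n.+1.
have := size_prefix (pre_mono X hkn).
rewrite /pre -[n.+1]addn1 iotaD filter_cat size_cat /= Xn /=.
move: Hk; rewrite /pre; lia.
Qed.


Definition good U (a : seq nat -> nat -> nat) :=
  nonprincipal_ultrafilter U /\ forall s, is_fin s -> nonstandard U (a s).

Lemma U_mono U a (H : good U a) (A B : nat -> Prop) :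
  U A -> (forall i, A i -> B i) -> U B.
Proof. by move: H => [[[h1 h2 h3 h4 h5] _] _]; apply: h3. Qed.

Lemma U_and U a (H : good U a) (A B : nat -> Prop) :
  U A -> U B -> U (fun i => A i /\ B i).
Proof. by move: H => [[[h1 h2 h3 h4 h5] _] _]; apply: h4. Qed.

Lemma U_T U a (H : good U a) : U (fun _ => True).
Proof. by move: H => [[[h1 h2 h3 h4 h5] _] _]. Qed.

Lemma U_em U a (H : good U a) (A : nat -> Prop) : U A \/ U (fun i => ~ A i).
Proof. by move: H => [[[h1 h2 h3 h4 h5] _] _]. Qed.

Lemma U_ex U a (H : good U a) (A : nat -> Prop) : U A -> exists i, A i.
Proof.
move=> hA; apply: NNPP => hn.
have hF : U (fun _ => False).
  by apply: (U_mono H hA) => i Ai; apply: hn; exists i.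
by move: H => [[[h1 h2 h3 h4 h5] _] _]; apply: h2.
Qed.

Lemma U_gt U a (H : good U a) s : is_fin s -> forall m, U (fun i => m < a s i).
Proof.
move=> Hs; have Hn := (H.2 s Hs).
elim=> [|m IH].
  by apply: (U_mono H (Hn 0)) => i; lia.
by apply: (U_mono H (U_and H IH (Hn m.+1))) => i [h1 h2]; lia.
Qed.

Lemma U_neq U a (H : good U a) s : is_fin s -> forall x, U (fun i => a s i <> x).
Proof. by move=> Hs; apply: (H.2 s Hs). Qed.

Lemma U_forall_le U a (H : good U a) (P : nat -> nat -> Prop) N :
  (forall n, n <= N -> U (P n)) -> U (fun i => forall n, n <= N -> P n i).
Proof.
elim: N P => [|N IH] P hP.
  apply: (U_mono H (hP 0 (leqnn 0))) => i h n; rewrite leqn0 => /eqP -> //.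
have h1 := IH P (fun n hn => hP n (leqW hn)).
apply: (U_mono H (U_and H h1 (hP N.+1 (leqnn _)))) => i [h2 h3] n.
rewrite leq_eqVlt => /orP[/eqP -> //|]; exact: h2.
Qed.

Definition big (s : seq nat) x := all (fun j => j < x) s.

Lemma mem_le_sumn (s : seq nat) j : j \in s -> j <= sumn s.
Proof. elim: s => //= x s IH; rewrite in_cons => /orP[/eqP ->|/IH]; lia. Qed.

Lemma U_big U a (H : good U a) s : is_fin s -> U (fun i => big s (a s i)).
Proof.
move=> Hs; apply: (U_mono H (U_gt H Hs (sumn s))) => i hi.
by apply/allP => j /mem_le_sumn; lia.
Qed.

Lemma rcons_fin s x : is_fin s -> big s x -> is_fin (rcons s x).
Proof.
case: s => // h p Hs Hb; move: Hs; rewrite /is_fin /= rcons_path => -> /=.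
exact: (allP Hb (last h p) (mem_last h p)).
Qed.

Lemma Tmem_rcons (T : seq nat -> Prop) s x : is_fin s -> big s x ->
  (Tmem T (fun j => j \in s \/ j = x) <-> T (rcons s x)).
Proof.
move=> Hs Hb; split.
  move=> [t [Ht Hm HT]].
  suff <- : t = rcons s x by [].
  apply: (irr_sorted_eq ltn_tr) => //; first exact: ltnn.
    exact: rcons_fin.
  move=> j; rewrite mem_rcons in_cons; apply/idP/idP.
    by move/Hm => [->|->]; rewrite ?eqxx ?orbT.
  by case/orP => [/eqP ->|h]; apply/Hm; auto.
move=> HT; exists (rcons s x); split => //; first exact: rcons_fin.
move=> j; rewrite mem_rcons in_cons; split.
  by case/orP => [/eqP ->|h]; auto.
by case=> [->|->]; rewrite ?eqxx ?orbT.
Qed.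


Definition atree U (a : seq nat -> nat -> nat) (T : seq nat -> Prop) st :=
  [/\ tree T, is_stem T st &
     forall s, T s -> prefix st s -> U (fun i => T (rcons s (a s i)))].

Lemma tree_fin T t : tree T -> T t -> is_fin t.
Proof. by move=> [_ h _]; apply: h. Qed.

Lemma tree_prefix T s t : tree T -> T t -> prefix s t -> T s.
Proof.
move=> [h1 h2 h3] Ht Hp.
have Hs : is_fin s.
  by move: Hp; rewrite prefixE => /eqP <-; apply: (take_sorted _ (h2 t Ht)).
apply: (h3 s t Ht Hs); apply/iseg_fin_prefix => //; exact: h2.
Qed.

Lemma stem_cmp T st u : tree T -> is_stem T st -> T u -> cmp u st.
Proof.
move=> HT [Hst Hc _] Hu.
have Fu := tree_fin HT Hu; have Fst := tree_fin HT Hst.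
case: (Hc u Hu) => /(iseg_fin_prefix _ _) h; rewrite /cmp.
  by rewrite (h Fst Fu) orbT.
by rewrite (h Fu Fst).
Qed.

Lemma stem_in T st : is_stem T st -> T st.
Proof. by case. Qed.

Lemma stem_unique T s s' : is_stem T s -> is_stem T s' -> s = s'.
Proof.
move=> [h1 h2 h3] [h1' h2' h3'].
case: (h2 s' h1') => h; first by rewrite (h3 s' h1' h2' h).
by rewrite (h3' s h1 h2 h).
Qed.

Lemma two_succ U a (H : good U a) t (P : nat -> Prop) : is_fin t ->
  U (fun i => P (a t i)) -> exists x y, x <> y /\ P x /\ P y.
Proof.
move=> Ht hU; have [i Pi] := U_ex H hU.
have [j [Pj hj]] := U_ex H (U_and H hU (U_neq H Ht (a t i))).
by exists (a t i), (a t j); split => //; move=> e; apply: hj.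
Qed.

Lemma prefix_ext_rcons (t s' : seq nat) x :
  prefix t s' -> s' <> t -> cmp s' (rcons t x) -> prefix (rcons t x) s'.
Proof.
move=> h1 h2; case/orP => // h.
case: (prefix_rcons_inv h) => [->|h']; first exact: prefix_refl.
by case: h2; apply: prefix_anti.
Qed.

Lemma stem_intro (S : seq nat -> Prop) t : tree S -> S t ->
  (forall u, S u -> cmp u t) ->
  (exists x y, x <> y /\ S (rcons t x) /\ S (rcons t y)) -> is_stem S t.
Proof.
move=> HS St Hc [x [y [hxy [Sx Sy]]]].
have Ft := tree_fin HS St.
split => //.
  move=> u Su; have Fu := tree_fin HS Su.
  case/orP: (Hc u Su) => h.
    by right; apply/(iseg_fin_prefix Fu Ft).
  by left; apply/(iseg_fin_prefix Ft Fu).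
move=> s' Ss' Hs' hts'.
have Fs' := tree_fin HS Ss'.
have hp : prefix t s' := (iseg_fin_prefix Ft Fs').1 hts'.
apply: NNPP => hne.
have cx : cmp s' (rcons t x).
  have Fx := tree_fin HS Sx.
  case: (Hs' _ Sx) => /(iseg_fin_prefix _ _) h; rewrite /cmp.
    by rewrite (h Fs' Fx).
  by rewrite (h Fx Fs') orbT.
have cy : cmp s' (rcons t y).
  have Fy := tree_fin HS Sy.
  case: (Hs' _ Sy) => /(iseg_fin_prefix _ _) h; rewrite /cmp.
    by rewrite (h Fs' Fy).
  by rewrite (h Fy Fs') orbT.
have px := prefix_ext_rcons hp hne cx.
have py := prefix_ext_rcons hp hne cy.
have := prefix_cmp px py => c.
have e : rcons t x = rcons t y.
  apply: prefix_anti; apply: cmp_size; rewrite ?size_rcons //.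
  by rewrite /cmp orbC.
by apply: hxy; have := congr1 (last 0) e; rewrite !last_rcons.
Qed.

Lemma atree_iff U a (H : good U a) T :
  alpha_tree U a T <-> exists st, atree U a T st.
Proof.
split.
  move=> [HT [st [Hst _ Hs]]]; exists st; split => // s Ts hp.
  have Fs := tree_fin HT Ts; have Fst := tree_fin HT (stem_in Hst).
  have hr : restr T st s by split => //; apply/(iseg_fin_prefix Fst Fs).
  apply: (U_mono H (U_and H (Hs s hr) (U_big H Fs))) => i [h1 h2].
  by apply/(Tmem_rcons T Fs h2).
move=> [st [HT Hst Hs]]; split => //; exists st; split => //.
  exists st; split; first exact: (stem_in Hst).
  have Fst := tree_fin HT (stem_in Hst).
  by apply/(iseg_fin_prefix Fst Fst); apply: prefix_refl.
move=> s [Ts hi].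
have Fs := tree_fin HT Ts; have Fst := tree_fin HT (stem_in Hst).
have hp : prefix st s := (iseg_fin_prefix Fst Fs).1 hi.
apply: (U_mono H (U_and H (Hs s Ts hp) (U_big H Fs))) => i [h1 h2].
by apply/(Tmem_rcons T Fs h2).
Qed.

Lemma atree_of U a (H : good U a) T st :
  alpha_tree U a T -> is_stem T st -> atree U a T st.
Proof.
move=> /(atree_iff H) [st' Ht] hs.
by case: Ht => [h1 h2 h3]; have e := stem_unique hs h2; rewrite e; split.
Qed.


Lemma ptrans (u v w : seq nat) : prefix u v -> prefix v w -> prefix u w.
Proof. move=> h1 h2; exact: (prefix_trans h1 h2). Qed.

Definition graftT (T : seq nat -> Prop) t (G : seq nat -> Prop)
  (R : seq nat -> seq nat -> Prop) :=
  fun u => T u /\ cmp u t /\ forall v, prefix t v -> prefix v u -> G v /\ R v u.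

Definition Rgood U (a : seq nat -> nat -> nat) (T : seq nat -> Prop) G
  (R : seq nat -> seq nat -> Prop) v :=
  [/\ R v v, (forall u w, R v u -> prefix w u -> prefix v w -> R v w) &
      (forall s, R v s -> prefix v s -> T s -> G s -> U (fun i => R v (rcons s (a s i))))].

Lemma graft U a (H : good U a) T st t G R :
  atree U a T st -> T t -> prefix st t -> G t ->
  (forall s, T s -> prefix t s -> G s -> U (fun i => G (rcons s (a s i)))) ->
  (forall v, T v -> prefix t v -> G v -> Rgood U a T G R v) ->
  atree U a (graftT T t G R) t.
Proof.
move=> [HT Hstem Hsucc] Tt pst Gt HG HR.
set S := graftT T t G R.
have St : S t.
  split => //; split; first by rewrite /cmp prefix_refl.
  move=> v h1 h2; rewrite -(prefix_anti h1 h2); split => //.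
  by case: (HR t Tt (prefix_refl t) Gt).
have key : forall s, S s -> prefix t s -> U (fun i => S (rcons s (a s i))).
  move=> s [Ts [cs Hs]] pts.
  have Gs := (Hs s pts (prefix_refl s)).1.
  have h1 := Hsucc s Ts (ptrans pst pts).
  have h2 := HG s Ts pts Gs.
  have h3 := @U_forall_le U a H
    (fun n i => size t <= n -> R (take n s) (rcons s (a s i))) (size s).
  have h3' : U (fun i => forall n, n <= size s -> size t <= n ->
                                 R (take n s) (rcons s (a s i))).
    apply: h3 => n hn.
    case: (leqP (size t) n) => htn; last first.
      by apply: (U_mono H (U_T H)) => i _ hh; exfalso; lia.
    have p1 : prefix t (take n s) := prefix_take_ge pts htn.
    have p2 : prefix (take n s) s := prefix_take s n.
    have [Gv Rv] := Hs _ p1 p2.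
    have Tv := tree_prefix HT Ts p2.
    case: (HR _ Tv p1 Gv) => _ _ hsucc.
    by apply: (U_mono H (hsucc s Rv p2 Ts Gs)) => i hi _.
  apply: (U_mono H (U_and H h1 (U_and H h2 h3'))) => i [T1 [G1 R1]].
  split => //; split.
    by rewrite /cmp (ptrans pts (prefix_rcons s _)) orbT.
  move=> v ptv pv.
  case: (prefix_rcons_inv pv) => [ev|pvs].
    rewrite ev; rewrite ev in ptv; split => //.
    by case: (HR _ T1 ptv G1).
  have [Gv _] := Hs v ptv pvs; split => //.
  have ev : take (size v) s = v by apply/eqP; rewrite -prefixE.
  rewrite -ev; apply: R1; first exact: size_prefix.
  exact: size_prefix.
have treeS : tree S.
  split; first by exists t.
    by move=> u [Tu _]; apply: (tree_fin HT).
  move=> s u [Tu [cu Hu]] Fs hi.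
  have Fu := tree_fin HT Tu.
  have psu : prefix s u := (iseg_fin_prefix Fs Fu).1 hi.
  split; first exact: tree_prefix HT Tu psu.
  split.
    case/orP: cu => h.
      by rewrite /cmp (ptrans psu h).
    exact: prefix_cmp psu h.
  move=> v ptv pvs.
  have pvu := ptrans pvs psu.
  have [Gv Rvu] := Hu v ptv pvu.
  split => //.
  case: (HR v (tree_prefix HT Tu pvu) ptv Gv) => _ hcl _.
  exact: hcl Rvu psu pvs.
split => //.
apply: stem_intro => //.
  by move=> u [_ [c _]].
have Ft := tree_fin HT Tt.
exact: (two_succ H Ft (key t St (prefix_refl t))).
Qed.

Lemma graft_sub T t G R u : graftT T t G R u -> T u.
Proof. by case. Qed.


Lemma body_pre T X k : body T X -> T (pre X k).
Proof. by move=> [_ h]; apply: h; [apply: pre_fin | apply: pre_iseg]. Qed.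

Lemma body_sub (S T : seq nat -> Prop) X :
  (forall u, S u -> T u) -> body S X -> body T X.
Proof. by move=> hST [h1 h2]; split => // s Fs hs; apply: hST; apply: h2. Qed.

Lemma body_long U a T st X : atree U a T st -> body T X ->
  forall m, exists k, m <= size (pre X k) /\ prefix st (pre X k).
Proof.
move=> [HT Hst _] HX m.
have [k hk] := pre_big HX.1 (maxn m (size st)).
exists k; split; first by move: hk; rewrite geq_max => /andP[].
have c := stem_cmp HT Hst (body_pre k HX).
apply: cmp_size; first by rewrite /cmp orbC.
by move: hk; rewrite geq_max => /andP[].
Qed.

Lemma body_node (W : seq nat -> Prop) X v k : tree W -> infinite_set X ->
  prefix v (pre X k) -> W v ->
  (forall k', prefix v (pre X k') -> W (pre X k')) -> body W X.
Proof.
move=> HW Hinf pv Wv Hk; split => // s Fs hs.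
have [k' ->] := iseg_pre Fs hs.
have c : cmp (pre X k') v.
  apply: (@prefix_cmp _ _ (pre X (maxn k k'))).
    by apply: pre_mono; lia.
  by apply: (ptrans pv); apply: pre_mono; lia.
case/orP: c => h; first exact: tree_prefix HW Wv h.
exact: Hk.
Qed.

Definition pb (P : Prop) : bool := if excluded_middle_informative P then true else false.

Lemma pbE P : pb P <-> P.
Proof. by rewrite /pb; case: excluded_middle_informative. Qed.

Lemma branch_exists U a (H : good U a) T st : atree U a T st -> exists X, body T X.
Proof.
move=> [HT Hst Hsucc].
have hnext : forall s, exists x, T s -> prefix st s ->
    T (rcons s x) /\ big s x /\ size s < x.
  move=> s; case: (classic (T s /\ prefix st s)) => [[Ts ps]|hn]; last first.
    by exists 0 => h1 h2; case: hn.
  have Fs := tree_fin HT Ts.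
  have [i hi] := U_ex H (U_and H (Hsucc s Ts ps) (U_and H (U_big H Fs) (U_gt H Fs (size s)))).
  by exists (a s i).
pose nxt s := proj1_sig (constructive_indefinite_description _ (hnext s)).
have hnx : forall s, T s -> prefix st s ->
    T (rcons s (nxt s)) /\ big s (nxt s) /\ size s < nxt s.
  by move=> s; rewrite /nxt; case: constructive_indefinite_description.
pose b n := iter n (fun s => rcons s (nxt s)) st.
have bS : forall n, b n.+1 = rcons (b n) (nxt (b n)) by [].
have hb : forall n, T (b n) /\ prefix st (b n).
  elim=> [|n [h1 h2]]; first by split; [exact: stem_in Hst | exact: prefix_refl].
  rewrite bS; have [h3 _] := hnx _ h1 h2; split => //.
  exact: ptrans h2 (prefix_rcons _ _).
have hsz : forall n, size (b n) = size st + n.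
  by elim=> [|n IH]; rewrite ?addn0 // bS size_rcons IH addnS.
have hmono : forall n m, n <= m -> prefix (b n) (b m).
  move=> n; elim=> [|m IH]; first by rewrite leqn0 => /eqP ->; apply: prefix_refl.
  rewrite leq_eqVlt => /orP[/eqP ->|h]; first exact: prefix_refl.
  by rewrite bS; apply: ptrans (IH h) (prefix_rcons _ _).
have hgt : forall n, size (b n) < nxt (b n).
  by move=> n; case: (hb n) => h1 h2; case: (hnx _ h1 h2) => _ [].
have hkey : forall n j, j \in b n -> j \in b j.+1.
  elim=> [|n IH] j hj.
    by apply: prefix_mem hj; apply: hmono.
  move: hj; rewrite bS mem_rcons in_cons => /orP[/eqP ej|hj]; last exact: IH.
  have := hgt n; rewrite hsz -ej => hlt.
  apply: (prefix_mem (hmono n.+1 j.+1 _)); first lia.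
  by rewrite bS mem_rcons in_cons ej eqxx.
pose X j := pb (exists n, j \in b n).
exists X; split.
  move=> m; exists (nxt (b m)); split.
    by have := hgt m; rewrite hsz; lia.
  by apply/pbE; exists m.+1; rewrite bS mem_rcons in_cons eqxx.
move=> s Fs [k Hk].
case: HT => [_ hfin hcl].
apply: (hcl s (b k) (hb k).1 Fs); exists k => j; rewrite Hk.
case hjk : (j < k); rewrite ?andbF ?andbT //.
apply/idP/idP => h.
  have [n hn] := (pbE _).1 h.
  by apply: (prefix_mem (hmono j.+1 k hjk)); apply: hkey hn.
by apply/pbE; exists k.
Qed.


Lemma prefix_lt (t s : seq nat) : prefix t s -> s <> t -> size t < size s.
Proof.
move=> p hne; case: (leqP (size s) (size t)) => // h.
by case: hne; apply: prefix_anti => //; apply: cmp_size => //; rewrite /cmp p orbT.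
Qed.

Lemma Rgood_triv U a (H : good U a) T G v : Rgood U a T G (fun _ _ => True) v.
Proof. by split => // s _ _ _ _; apply: (U_mono H (U_T H)). Qed.

Lemma restrict U a (H : good U a) T st R stR t :
  atree U a T st -> atree U a R stR -> T t -> R t -> prefix st t -> prefix stR t ->
  exists S, atree U a S t /\ (forall u, S u -> T u) /\ (forall u, S u -> R u).
Proof.
move=> AT AR Tt Rt pst pstR.
have [HT _ Hsucc] := AT.
have A := @graft U a H R stR t T (fun _ _ => True) AR Rt pstR Tt
  (fun s Ts pts Gs => Hsucc s Gs (ptrans pst pts))
  (fun v _ _ _ => Rgood_triv H R T v).
exists (graftT R t T (fun _ _ => True)); split => //; split; last exact: graft_sub.
move=> u [Ru [cu Hu]].
case/orP: cu => h; first exact: tree_prefix HT Tt h.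
exact: (Hu u h (prefix_refl u)).1.
Qed.

Lemma open_ramsey U a (H : good U a) T st O : atree U a T st -> aE_open U a O ->
  exists S, atree U a S st /\ (forall u, S u -> T u) /\
    ((forall X, body S X -> O X) \/ (forall X, body S X -> ~ O X)).
Proof.
move=> AT HO; have [HT Hst Hsucc] := AT.
pose acc t := exists S, atree U a S t /\ (forall u, S u -> T u) /\
                        forall X, body S X -> O X.
have K : forall t, T t -> prefix st t -> U (fun i => acc (rcons t (a t i))) -> acc t.
  move=> t Tt pst hU.
  have hW : forall v, exists W, acc v -> atree U a W v /\ (forall u, W u -> T u) /\
                        forall X, body W X -> O X.
    move=> v; case: (classic (acc v)) => [[W hW]|hn]; first by exists W.
    by exists T.
  pose Wf v := proj1_sig (constructive_indefinite_description _ (hW v)).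
  have hWf : forall v, acc v -> atree U a (Wf v) v /\ (forall u, Wf v u -> T u) /\
                        forall X, body (Wf v) X -> O X.
    by move=> v; rewrite /Wf; case: constructive_indefinite_description.
  pose G v := v = t \/ acc (take (size t).+1 v).
  pose R v u := acc v /\ size v = (size t).+1 -> Wf v u.
  have hGs : forall s, T s -> prefix t s -> G s -> U (fun i => G (rcons s (a s i))).
    move=> s Ts pts Gs; case: (eqVneq s t) => [->|hne].
      apply: (U_mono H hU) => i hi; right.
      by rewrite take_oversize // size_rcons.
    have hlt := prefix_lt pts (elimN eqP hne).
    case: Gs => [e|hacc]; first by move: hne; rewrite e eqxx.
    apply: (U_mono H (U_T H)) => i _; right.
    by rewrite take_rcons_le.
  have hR : forall v, T v -> prefix t v -> G v -> Rgood U a T G R v.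
    move=> v Tv ptv Gv; split.
    - by move=> hh; have [[_ hs _] _] := hWf v hh.1; exact: stem_in hs.
    - move=> u w Ruw pwu pvw hh; have [[ht _ _] _] := hWf v hh.1.
      exact: tree_prefix ht (Ruw hh) pwu.
    - move=> s Rvs pvs Ts Gs.
      case: (classic (acc v /\ size v = (size t).+1)) => [hh|hn].
        have [[_ _ hsu] _] := hWf v hh.1.
        by apply: (U_mono H (hsu s (Rvs hh) pvs)) => i hi _.
      by apply: (U_mono H (U_T H)) => i _ hh; case: hn.
  have A := graft H AT Tt pst (or_introl erefl) hGs hR.
  exists (graftT T t G R); split => //; split; first exact: graft_sub.
  move=> X HX.
  have [k [hk pk]] := body_long A HX (size t).+1.
  set u := pre X k in hk pk.
  set v0 := take (size t).+1 u.
  have p1 : prefix t v0 := prefix_take_ge pk (leqnSn _).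
  have p2 : prefix v0 u := prefix_take u _.
  have Su : graftT T t G R u := body_pre k HX.
  have [Gv0 Rv0] := Su.2.2 v0 p1 p2.
  have hsz : size v0 = (size t).+1 by rewrite size_takel.
  have hacc : acc v0.
    case: Gv0 => [e|h]; first by move: hsz; rewrite e; lia.
    by rewrite -(take_oversize (leqnn (size v0))) hsz.
  have [AW [_ WO]] := hWf v0 hacc.
  have [HW HWs _] := AW.
  apply: WO; apply: (body_node HW HX.1 p2 (stem_in HWs)) => k' hk'.
  have Sk' : graftT T t G R (pre X k') := body_pre k' HX.
  exact: (Sk'.2.2 v0 p1 hk').2 (conj hacc hsz).
case: (classic (acc st)) => [[S [AS [ST SO]]]|hna].
  by exists S; split => //; split => //; left.
have hGs : forall s, T s -> prefix st s -> ~ acc s ->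
    U (fun i => ~ acc (rcons s (a s i))).
  move=> s Ts pss hn; case: (U_em H (fun i => acc (rcons s (a s i)))) => // h.
  by case: hn; apply: K.
have A := @graft U a H T st st (fun v => ~ acc v) (fun _ _ => True) AT
  (stem_in Hst) (prefix_refl st) hna hGs (fun v _ _ _ => Rgood_triv H T _ v).
exists (graftT T st (fun v => ~ acc v) (fun _ _ => True)); split => //.
split; first exact: graft_sub.
right => X HX OX.
case: HO => [_ Hop]; have [R' [AR bRX RO]] := Hop X OX.
have [stR AR'] := (atree_iff H R').1 AR.
have [k [hk pk]] := body_long A HX (size stR).
set t := pre X k in hk pk.
have Rt : R' t := body_pre k bRX.
have pRt : prefix stR t.
  have [HR HRs _] := AR'.
  have c := stem_cmp HR HRs Rt.
  by apply: cmp_size => //; rewrite /cmp orbC.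
have St : graftT T st (fun v => ~ acc v) (fun _ _ => True) t := body_pre k HX.
apply: (St.2.2 t pk (prefix_refl t)).1.
have [S2 [A2 [S2T S2R]]] := restrict H AT AR' St.1 Rt pk pRt.
exists S2; split => //; split => // Y HY.
by apply: RO; apply: body_sub S2R HY.
Qed.



Lemma open_body U a S : alpha_tree U a S -> aE_open U a (body S).
Proof. by move=> AS; split; [move=> X [] | move=> X hX; exists S]. Qed.

Lemma null_nd U a (H : good U a) N :
  alpha_Ramsey_null U a N -> aE_nowhere_dense U a N.
Proof.
move=> Hn O HO Hcl X OX.
case: HO => [_ Hop]; have [R [AR bRX RO]] := Hop X OX.
have [S [AS SR _ Sn]] := Hn R AR.
have [stS AS'] := (atree_iff H S).1 AS.
have [Y hY] := branch_exists H AS'.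
have [_ hc] := Hcl Y (RO Y (body_sub SR hY)).
have [Z [hZ NZ]] := hc (body S) (open_body AS) hY.
exact: Sn Z hZ NZ.
Qed.

Lemma nd_null U a (H : good U a) N :
  aE_nowhere_dense U a N -> alpha_Ramsey_null U a N.
Proof.
move=> Hnd T AT.
have [st AT'] := (atree_iff H T).1 AT.
pose O' := fun X => exists R, alpha_tree U a R /\ body R X /\
                             forall Y, body R Y -> ~ N Y.
have HO' : aE_open U a O'.
  split; first by move=> X [R [_ [[h _] _]]].
  by move=> X [R [AR [bRX hR]]]; exists R; split => // Y bY; exists R.
have [S [AS [ST hc]]] := open_ramsey H AT' HO'.
have AS2 : alpha_tree U a S by apply/(atree_iff H); exists st.
exists S; split => //.
  by exists st; split; [case: AT' | case: AS].
case: hc => hc.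
  by move=> X bX; have [R [_ [bRX hR]]] := hc X bX; apply: hR.
exfalso.
have [X hX] := branch_exists H AS.
apply: (Hnd (body S) (open_body AS2) _ X hX).
move=> Y hY; split; first by case: hY.
move=> O'' HO'' O''Y; apply: NNPP => hn.
case: HO'' => [_ Hop]; have [R [AR bRY RO]] := Hop Y O''Y.
apply: (hc Y hY); exists R; split => //; split => // Z bZ NZ.
by apply: hn; exists Z; split => //; apply: RO.
Qed.

Lemma union_null U a (H : good U a) (Ns : nat -> (nat -> bool) -> Prop) :
  (forall n, alpha_Ramsey_null U a (Ns n)) ->
  alpha_Ramsey_null U a (fun X => exists n, Ns n X).
Proof.
move=> Hn T AT.
have [st AT'] := (atree_iff H T).1 AT.
have [HT Hst Hsucc] := AT'.
have hR : forall v, exists Rv, T v /\ prefix st v ->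
   atree U a Rv v /\ (forall u, Rv u -> T u) /\
   forall X, body Rv X -> ~ Ns (size v - size st) X.
  move=> v; case: (classic (T v /\ prefix st v)) => [[Tv pv]|hn]; last first.
    by exists T.
  have [S0 [A0 [S0T _]]] := restrict H AT' AT' Tv Tv pv pv.
  have A0' : alpha_tree U a S0 by apply/(atree_iff H); exists v.
  have [S1 [AS1 S1S0 [st1 [h1 h2]] av]] := Hn (size v - size st) S0 A0'.
  have e : st1 = v by apply: (stem_unique h1); case: A0.
  rewrite e in h2.
  exists S1 => _; split.
    have := @atree_of U a H S1 v AS1 h2. exact.
  by split => // u /S1S0 /S0T.
pose Rf v := proj1_sig (constructive_indefinite_description _ (hR v)).
have hRf : forall v, T v -> prefix st v ->
   atree U a (Rf v) v /\ (forall u, Rf v u -> T u) /\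
   forall X, body (Rf v) X -> ~ Ns (size v - size st) X.
  by move=> v h1 h2; rewrite /Rf; case: constructive_indefinite_description => W hW; apply: hW.
have hG : forall s, T s -> prefix st s -> True -> U (fun i => True).
  by move=> *; apply: U_T H.
have hRg : forall v, T v -> prefix st v -> True -> Rgood U a T (fun _ => True) Rf v.
  move=> v Tv pv _; have [[HR HRs HRsu] _] := hRf v Tv pv; split.
  - exact: stem_in HRs.
  - by move=> u w Ru pwu _; exact: tree_prefix HR Ru pwu.
  - by move=> s Rs pvs _ _; apply: HRsu.
have A := @graft U a H T st st (fun _ => True) Rf AT' (stem_in Hst) (prefix_refl st) I hG hRg.
exists (graftT T st (fun _ => True) Rf); split.
- by apply/(atree_iff H); exists st.
- exact: graft_sub.
- by exists st; split => //; case: A.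
move=> X HX [n Nn].
have [k [hk pk]] := body_long A HX (size st + n).
set v := take (size st + n) (pre X k).
have p1 : prefix st v := prefix_take_ge pk (leq_addr _ _).
have p2 : prefix v (pre X k) := prefix_take _ _.
have Tv : T v := tree_prefix HT (graft_sub (body_pre k HX)) p2.
have [[HR HRs _] [_ Rn]] := hRf v Tv p1.
have hsz : size v - size st = n by rewrite size_takel //; lia.
apply: (Rn X); last by rewrite hsz.
apply: (body_node HR HX.1 p2 (stem_in HRs)) => k' hk'.
exact: ((body_pre k' HX).2.2 v p1 hk').2.
Qed.

Lemma null_meager U a (H : good U a) N : alpha_Ramsey_null U a N -> aE_meager U a N.
Proof.
move=> hN; exists (fun _ => N); split; first by move=> _; apply: null_nd.
by move=> X NX; exists 0.
Qed.

Lemma meager_null U a (H : good U a) N : aE_meager U a N -> alpha_Ramsey_null U a N.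
Proof.
move=> [Ns [hnd hcov]].
have hu := union_null H (fun n => nd_null H (hnd n)).
move=> T AT; have [S [h1 h2 h3 h4]] := hu T AT.
by exists S; split => // X hX NX; apply: (h4 X hX (hcov X NX)).
Qed.

Lemma baire_ramsey U a (H : good U a) XX : aE_Baire U a XX -> alpha_Ramsey U a XX.
Proof.
move=> [O [HO HM]] T AT.
have hnull := meager_null H HM.
have [T1 [A1 T1T [st1 [hT hT1]] av]] := hnull T AT.
have AT1 := atree_of H A1 hT1.
have [S [AS [ST1 hc]]] := open_ramsey H AT1 HO.
exists S; split.
- by apply/(atree_iff H); exists st1.
- by move=> u /ST1 /T1T.
- by exists st1; split => //; case: AS.
case: hc => hc; [left|right] => X bX; have bT1 := body_sub ST1 bX;
  have := av X bT1; have := hc X bX; tauto.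
Qed.

Lemma ramsey_baire U a (H : good U a) XX : alpha_Ramsey U a XX -> aE_Baire U a XX.
Proof.
move=> HR.
pose O := fun X => exists R, alpha_tree U a R /\ body R X /\ forall Y, body R Y -> XX Y.
have HO : aE_open U a O.
  split; first by move=> X [R [_ [[h _] _]]].
  by move=> X [R [AR [bRX hR]]]; exists R; split => // Y bY; exists R.
exists O; split => //; apply: null_meager => // T AT.
have [S [AS ST stS hc]] := HR T AT.
exists S; split => //.
case: hc => hc X bX.
  have h1 := hc X bX.
  have h2 : O X by exists S; split => //; split => //.
  tauto.
have nX := hc X bX.
have nO : ~ O X by move=> [R [_ [bRX hR]]]; apply: nX; apply: hR.
tauto.
Qed.

Theorem mainTheorem5
  (U : (nat -> Prop) -> Prop) (HU : nonprincipal_ultrafilter U)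
  (a : seq nat -> nat -> nat) (Ha : forall s, is_fin s -> nonstandard U (a s))
  (XX : (nat -> bool) -> Prop) (HXX : forall X, XX X -> infinite_set X) :
  (alpha_Ramsey U a XX <-> aE_Baire U a XX) /\
  (alpha_Ramsey_null U a XX <-> aE_meager U a XX).
Proof.
have H : good U a by split.
split; split.
- exact: ramsey_baire.
- exact: baire_ramsey.
- exact: null_meager.
- exact: meager_null.
Qed.
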